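(* Let $G$ be a group, $k\ge1$ and $s\ge0$ integers such that for every $i<k$ there is a set $A_i\subseteq G$ with $|A_i|\le s$ such that $Z(G/Z_i(G))=C_{G/Z_i(G)}(A_i)$ (where $A_i$ is read via its image in $G/Z_i(G)$). Let $c\in G$. If the set $\{(x_0,\dots,x_k)\in G^{k+1}:[x_0,x_1,\dots,x_k]=c\}$ is $2(s+1)^k$-large in $G^{k+1}$, then $c=1$ and $G$ is nilpotent of class at most $k$.
   Context: $[a,b]=a^{-1}b^{-1}ab$ and commutators are left-normed: $[x_0,x_1,\dots,x_{j+1}]=[[x_0,\dots,x_j],x_{j+1}]$. $Z_i(G)$ denotes the $i$-th term of the upper central series ($Z_0(G)=1$, $Z_{i+1}(G)/Z_i(G)=Z(G/Z_i(G))$). A subset $X$ of a group $K$ is $m$-large in $K$ if the intersection of any $m$ left translates $a_1X\cap\dots\cap a_mX$ ($a_i\in K$) is non-empty. *)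

(* Defs.v *)
From HB Require Import structures.
From mathcomp Require Import all_boot monoid.
Set Implicit Arguments. Unset Strict Implicit. Unset Printing Implicit Defensive.
Local Open Scope group_scope.

Fixpoint lcomm_nat (G : groupType) (x : nat -> G) (n : nat) : G :=
  match n with
  | 0 => x 0%N
  | n'.+1 => commg (lcomm_nat x n') (x n)
  end.

Definition lcomm (G : groupType) (k : nat) (x : 'I_k.+1 -> G) : G :=
  lcomm_nat (fun n => x (inord n)) k.

(* Membership in the i-th term Z_i(G) of the upper central series:
   Z_0 = 1, and x Z_i is central in G/Z_i iff [x,y] \in Z_i for all y. *)
Fixpoint upper_central (G : groupType) (i : nat) (x : G) : Prop :=
  match i with
  | 0 => x = 1
  | i'.+1 => forall y : G, upper_central i' (commg x y)
  end.

Definition in_ltranslate (G : groupType) (k : nat) (a : 'I_k.+1 -> G)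
  (X : ('I_k.+1 -> G) -> Prop) (y : 'I_k.+1 -> G) : Prop :=
  X (fun i => (a i)^-1 * y i).

Definition large_pow (G : groupType) (k m : nat)
  (X : ('I_k.+1 -> G) -> Prop) : Prop :=
  forall a : 'I_m -> ('I_k.+1 -> G),
    exists y : 'I_k.+1 -> G, forall j : 'I_m, in_ltranslate (a j) X y.

(* Main.v *)
Require Import Defs.
From HB Require Import structures.
From mathcomp Require Import all_boot monoid.
Local Open Scope group_scope.

Section Aux.
Variable G : groupType.
Implicit Types x y g h w a : G.

Ltac gsolve := rewrite /commg /conjg; rewrite ?invgM ?invgK ?mulgA;
  repeat (rewrite ?mulgK ?mulgVK ?mulgV ?mulVg ?mul1g ?mulg1 ?mulgA); try done.

Lemma idM x y g : commg (x * y) g = conjg (commg x g) y * commg y g.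
Proof. gsolve. Qed.
Lemma idV x g : commg x^-1 g = (conjg (commg x g) x^-1)^-1.
Proof. gsolve. Qed.
Lemma idJ x h g : commg (conjg x h) g = conjg (commg x (conjg g h^-1)) h.
Proof. gsolve. Qed.
Lemma idR w a y : commg w (a * y) = commg w y * conjg (commg w a) y.
Proof. gsolve. Qed.
Lemma idC x y : conjg (conjg x y) y^-1 = x.
Proof. gsolve. Qed.

Lemma Z1 i : upper_central i (1 : G).
Proof. elim: i => [|i IH] //= y; by rewrite /commg /conjg !gsimp. Qed.

Lemma Zclos i : (forall x y : G, upper_central i x -> upper_central i y -> upper_central i (x * y))
  /\ (forall x : G, upper_central i x -> upper_central i x^-1)
  /\ (forall x h : G, upper_central i x -> upper_central i (conjg x h)).
Proof.
elim: i => [|i [IM [IV IJ]]] /=.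
  split; first by move=> x y -> ->; rewrite mulg1.
  split; first by move=> x ->; rewrite invg1.
  by move=> x h ->; rewrite /conjg mul1g mulVg.
split; first by move=> x y Hx Hy g; rewrite idM; apply: IM; [apply: IJ|].
split; first by move=> x Hx g; rewrite idV; apply: IV; apply: IJ.
by move=> x h Hx g; rewrite idJ; apply: IJ.
Qed.

Lemma ZM i x y : upper_central i x -> upper_central i y -> upper_central i (x * y).
Proof. by case: (Zclos i) => [H _]; apply: H. Qed.
Lemma ZV i x : upper_central i x -> upper_central i x^-1.
Proof. by case: (Zclos i) => [_ [H _]]; apply: H. Qed.
Lemma ZJ i x h : upper_central i x -> upper_central i (conjg x h).
Proof. by case: (Zclos i) => [_ [_ H]]; apply: H. Qed.

Lemma lcomm_ext (x x' : nat -> G) n : (forall i, (i <= n)%N -> x i = x' i) ->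
  lcomm_nat x n = lcomm_nat x' n.
Proof.
elim: n => [|n IH] H /=; first exact: H.
rewrite IH ?H // => i Hi; apply: H; exact: leqW.
Qed.

Lemma Zlcomm (x : nat -> G) n d : upper_central (n + d) (x 0%N) -> upper_central d (lcomm_nat x n).
Proof.
elim: n d => [|n IH] d //= H.
have := IH d.+1; rewrite addnS => /(_ H); apply.
Qed.

Section Core.
Variables (k : nat) (Bs : nat -> seq G) (y : nat -> G) (c : G).
Definition adm (t : nat -> G) := t 0%N = 1 /\
  forall n, (0 < n <= k)%N -> t n = 1 \/ t n \in Bs n.
Hypothesis HB : forall n, (0 < n <= k)%N -> forall x,
  upper_central (k - n).+1 x <-> (forall a, a \in Bs n -> upper_central (k - n) (commg x a)).
Hypothesis HX : forall t, adm t -> lcomm_nat (fun n => t n * y n) k = c.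
Hypothesis Hk : (1 <= k)%N.

Lemma core_claim d : (d < k)%N -> forall t, adm t ->
  upper_central d.+1 (lcomm_nat (fun n => t n * y n) (k - d.+1)).
Proof.
elim: d => [|d IH] Hd t [t0 tB].
- have Hn : (0 < k <= k)%N by rewrite Hk leqnn.
  have H := HB _ Hn; rewrite subnn in H; apply/H.
  move=> a Ha.
  set w := lcomm_nat _ _.
  pose t1 m := if m == k then a else t m.
  pose t2 m := if m == k then 1 else t m.
  have k0 : k != 0%N by rewrite -lt0n.
  have ad1 : adm t1.
    split; first by rewrite /t1 eq_sym (negbTE k0).
    by move=> m Hm; rewrite /t1; case: eqP => [->|_]; [right|apply: tB].
  have ad2 : adm t2.
    split; first by rewrite /t2 eq_sym (negbTE k0).
    by move=> m Hm; rewrite /t2; case: eqP => _; [left|apply: tB].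
  have E1 := HX _ ad1; have E2 := HX _ ad2.
  have kE : k = (k - 1).+1 by rewrite subn1 prednK.
  move: E1 E2; rewrite {1 2}kE /= /t1 /t2 -kE eqxx mul1g.
  have -> : lcomm_nat (fun m => (if m == k then a else t m) * y m) (k - 1) = w.
    apply: lcomm_ext => i Hi; case: eqP => // E; move: Hi; rewrite E.
    by rewrite leqNgt subn1 ltn_predL Hk.
  have -> : lcomm_nat (fun m => (if m == k then 1 else t m) * y m) (k - 1) = w.
    apply: lcomm_ext => i Hi; case: eqP => // E; move: Hi; rewrite E.
    by rewrite leqNgt subn1 ltn_predL Hk.
  rewrite idR => E1 E2.
  have : conjg (commg w a) (y k) = 1.
    by rewrite -(mulKg (commg w (y k)) (conjg _ _)) E1 E2 mulVg.
  by move=> E; rewrite /= -(idC (commg w a) (y k)) E /conjg !gsimp.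
- set j := (k - d.+2)%N.
  have nE : (k - d.+1 = j.+1)%N by rewrite /j (subnS k d.+1) prednK // subn_gt0.
  have Hn : (0 < j.+1 <= k)%N by rewrite -nE leq_subr subn_gt0 Hd.
  have kn : (k - j.+1 = d.+1)%N by rewrite -nE subKn // ltnW.
  have H := HB _ Hn; rewrite kn in H; apply/H.
  move=> a Ha.
  set w := lcomm_nat _ _.
  pose t1 m := if m == j.+1 then a else t m.
  pose t2 m := if m == j.+1 then 1 else t m.
  have ad1 : adm t1.
    split; first by [].
    by move=> m Hm; rewrite /t1; case: eqP => [->|_]; [right|apply: tB].
  have ad2 : adm t2.
    split; first by [].
    by move=> m Hm; rewrite /t2; case: eqP => _; [left|apply: tB].
  have E1 := IH (ltnW Hd) _ ad1; have E2 := IH (ltnW Hd) _ ad2.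
  move: E1 E2; rewrite nE /= /t1 /t2 eqxx mul1g.
  have -> : lcomm_nat (fun m => (if m == j.+1 then a else t m) * y m) j = w.
    by apply: lcomm_ext => i Hi; case: eqP => // E; move: Hi; rewrite E ltnn.
  have -> : lcomm_nat (fun m => (if m == j.+1 then 1 else t m) * y m) j = w.
    by apply: lcomm_ext => i Hi; case: eqP => // E; move: Hi; rewrite E ltnn.
  rewrite idR => E1 E2.
  have : upper_central d.+1 (conjg (commg w a) (y j.+1)).
    rewrite -(mulKg (commg w (y j.+1)) (conjg _ _)); apply: ZM => //; exact: ZV.
  by move=> /(ZJ _ _ (y j.+1)^-1); rewrite idC.
Qed.

Lemma core_final : upper_central k (y 0%N) /\ c = 1.
Proof.
have adt : adm (fun _ => 1) by split => // n _; left.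
have Hk1 : (k.-1 < k)%N by rewrite ltn_predL.
have := core_claim (k.-1) Hk1 (fun _ => 1) adt; rewrite prednK // subnn /= mul1g => Hy.
split=> //.
rewrite -(HX _ adt); apply: (@Zlcomm _ k 0); rewrite addn0 /= mul1g //.
Qed.
End Core.
End Aux.

Lemma fchoice (T : Type) (P : nat -> T -> Prop) k :
  (forall i, (i < k)%N -> exists x, P i x) -> (exists x : T, True) ->
  exists f : nat -> T, forall i, (i < k)%N -> P i (f i).
Proof.
move=> H [x0 _]; elim: k H => [|k IH] H; first by exists (fun _ => x0).
have [f Hf] : exists f : nat -> T, forall i, (i < k)%N -> P i (f i).
  by apply: IH => i Hi; apply: H; exact: leqW.
have [x Hx] := H k (ltnSn k).
exists (fun i => if i == k then x else f i) => i Hi.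
case: eqP => [->//|/eqP ne]; apply: Hf; by rewrite ltn_neqAle ne -ltnS.
Qed.

Theorem theorem5p13 (G : groupType) (k s : nat) (c : G) :
  (1 <= k)%N ->
  (forall i : nat, (i < k)%N ->
     exists A : seq G, (size A <= s)%N /\
       (forall x : G, upper_central i.+1 x <->
          (forall a : G, a \in A -> upper_central i (commg x a)))) ->
  @large_pow G k (2 * (s.+1) ^ k)%N (fun x : 'I_k.+1 -> G => lcomm x = c) ->
  c = 1 /\ (forall x : G, upper_central k x).
Proof.
move=> Hk HA Hlarge.
have [Af HAf] := @fchoice _ (fun i A => (size A <= s)%N /\
       (forall x : G, upper_central i.+1 x <->
          (forall a : G, a \in A -> upper_central i (commg x a)))) k HA (ex_intro _ [::] I).
pose Bs n := Af (k - n)%N.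
have cardT : #|{: bool * {ffun 'I_k -> 'I_s.+1}}| = (2 * s.+1 ^ k)%N by rewrite card_prod card_bool card_ffun !card_ord.
suff H : forall g : G, c = 1 /\ upper_central k g.
  by split; [case: (H 1)| move=> x; case: (H x)].
move=> g.
pose F (t : bool * {ffun 'I_k -> 'I_s.+1}) (i : 'I_k.+1) : G := if (i == 0 :> nat) then (if t.1 then g else 1)
   else (nth 1 (1 :: Bs i) (if (insub i.-1 : option 'I_k) is Some j then t.2 j else (ord0 : 'I_s.+1)))^-1.
pose d0 : bool * {ffun 'I_k -> 'I_s.+1} := (false, [ffun _ => ord0]).
pose a (j : 'I_(2 * s.+1 ^ k)) := F (nth d0 (enum {: bool * {ffun 'I_k -> 'I_s.+1}}) j).
have [yv Hy] := Hlarge a.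
have HT : forall t : bool * {ffun 'I_k -> 'I_s.+1}, lcomm (fun i => (F t i)^-1 * yv i) = c.
  move=> t.
  have Ht : (index t (enum {: bool * {ffun 'I_k -> 'I_s.+1}}) < 2 * s.+1 ^ k)%N by rewrite -cardT cardE index_mem mem_enum.
  by have := Hy (Ordinal Ht); rewrite /in_ltranslate /a /= nth_index ?mem_enum.
have HB : forall n, (0 < n <= k)%N -> forall x,
  upper_central (k - n).+1 x <-> (forall a, a \in Bs n -> upper_central (k - n) (commg x a)).
  move=> n /andP [n0 nk].
  have Hkn : (k - n < k)%N by rewrite ltn_subrL n0 (leq_trans n0 nk).
  exact: (HAf _ Hkn).2.
have core : forall b : bool, upper_central k ((if b then g else 1)^-1 * yv (inord 0)) /\ c = 1.
  move=> b.
  pose yb n := if n == 0%N then (if b then g else 1)^-1 * yv (inord 0) else yv (inord n).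
  have HX : forall t, @adm G k Bs t -> lcomm_nat (fun n => t n * yb n) k = c.
    move=> t [t0 tB].
    pose f := [ffun i : 'I_k => inord (index (t i.+1) (1 :: Bs i.+1)) : 'I_s.+1].
    rewrite -(HT (b, f)) /lcomm; apply: lcomm_ext => n Hn.
    rewrite /F /= inordK ?ltnS //; case: n Hn => [|n] Hn /=; first by rewrite t0 mul1g.
    have Hin : t n.+1 \in 1 :: Bs n.+1.
      by rewrite inE; case: (tB n.+1 Hn) => [->|->]; rewrite ?eqxx ?orbT.
    have Hs : (index (t n.+1) (1%g :: Bs n.+1) < s.+1)%N.
      apply: (@leq_trans (size (1%g :: Bs n.+1))); first by rewrite index_mem.
      rewrite /= ltnS; apply: (HAf _ _).1; by rewrite ltn_subrL Hk.
    have nk : (n < k)%N by [].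
    by rewrite (insubT (fun m => m < k)%N nk) ffunE /= inordK // nth_index // invgK.
  by have := @core_final G k Bs yb c HB HX Hk.
have [Z0 c1] := core false; have [Z1 _] := core true.
split=> //.
move: Z0 Z1; rewrite invg1 mul1g => Z0 /(ZV _ _) Z1.
by have := ZM _ _ _ _ Z0 Z1; rewrite invgM invgK mulgA mulgV mul1g.
Qed.
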